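(* Let $\Gamma=M\mathbb{Z}^n$ be a lattice in $\mathbb{R}^n$ (or $\mathbb{C}^n$), $M$ invertible, and let $A$ be a dilation matrix for $\Gamma$. Then there exists an integer $\beta\ge1$ such that $A^\beta$ yields a radix representation of $\Gamma$ with digit set $D_\beta=A^\beta(F_\Gamma)\cap\Gamma$, where $F_\Gamma=M([-\tfrac12,\tfrac12)^n)$; i.e. every $x\in\Gamma$ equals $\sum_{j=0}^N A^{\beta j}d_j$ for some $N\ge0$ and $d_j\in D_\beta$.
   Context: An integer dilation matrix is an $n\times n$ matrix with integer entries all of whose eigenvalues $\lambda$ satisfy $|\lambda|>1$. A matrix $A$ is a dilation matrix for $\Gamma=M\mathbb{Z}^n$ if $M^{-1}AM$ is an integer dilation matrix. *)

(* Defs.v *)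
(* The ambient field is an arbitrary numClosedFieldType C
   (covers C^n; R^n is the special case of real M, A). *)
From HB Require Import structures.
From mathcomp Require Import all_boot all_order all_algebra.
Set Implicit Arguments. Unset Strict Implicit. Unset Printing Implicit Defensive.
Import Order.TTheory GRing.Theory Num.Theory.
Local Open Scope ring_scope.

Section Lattice.
Variables (C : numClosedFieldType) (n : nat).

Definition int_dilation_matrix (B : 'M[C]_n) : Prop :=
  (exists Z : 'M[int]_n, B = map_mx (fun z : int => z%:~R) Z) /\
  (forall lambda : C, eigenvalue B lambda -> 1 < `|lambda|).

Definition dilation_matrix_for (M A : 'M[C]_n) : Prop :=
  int_dilation_matrix (invmx M *m A *m M).

Definition in_lattice (M : 'M[C]_n) (x : 'cV[C]_n) : Prop :=
  exists z : 'cV[int]_n, x = M *m map_mx (fun k : int => k%:~R) z.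

Definition in_fund_dom (M : 'M[C]_n) (x : 'cV[C]_n) : Prop :=
  exists t : 'cV[C]_n,
    (forall i, t i 0 \is Num.real /\ - (2%:R)^-1 <= t i 0 /\ t i 0 < (2%:R)^-1)
    /\ x = M *m t.

Definition in_digit_set (M B : 'M[C]_n) (d : 'cV[C]_n) : Prop :=
  in_lattice M d /\ exists f, in_fund_dom M f /\ d = B *m f.

End Lattice.

(* Main.v *)
Require Import Defs.
From HB Require Import structures.
From mathcomp Require Import all_boot all_order all_algebra.
From Stdlib Require Import Lia.
Set Implicit Arguments. Unset Strict Implicit. Unset Printing Implicit Defensive.
Import Order.TTheory GRing.Theory Num.Theory.
Local Open Scope ring_scope.
Section RB.
Variables (R : numDomainType) (n : nat).
Definition rowbound (X : 'M[R]_n) (c : R) := forall i, \sum_j `|X i j| <= c.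

Lemma rowboundM X Y a b : 0 <= b -> rowbound X a -> rowbound Y b ->
  rowbound (X *m Y) (a * b).
Proof.
move=> b0 hX hY i.
apply: le_trans (_ : \sum_j \sum_k `|X i k| * `|Y k j| <= _).
  apply: ler_sum => j _; rewrite mxE.
  by apply: le_trans (ler_norm_sum _ _ _) _; apply: ler_sum => k _; rewrite normrM.
rewrite exchange_big /=.
apply: le_trans (_ : \sum_k `|X i k| * b <= _).
  by apply: ler_sum => k _; rewrite -mulr_sumr; apply: ler_wpM2l.
by rewrite -mulr_suml; apply: ler_wpM2r.
Qed.

Lemma rowbound1 : rowbound 1%:M 1.
Proof.
move=> i; rewrite (bigD1 i) //= big1 ?addr0; first by rewrite mxE eqxx normr1.
by move=> j /negbTE ji; rewrite mxE eq_sym ji normr0.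
Qed.

Lemma rowboundX X a : 0 <= a -> rowbound X a -> forall k, rowbound (X ^+ k) (a ^+ k).
Proof.
move=> a0 hX; elim=> [|k IH]; first by rewrite !expr0 -idmxE; exact: rowbound1.
by rewrite !exprS -mulmxE; apply: rowboundM => //; rewrite exprn_ge0.
Qed.

Lemma rowbound_le X a b : a <= b -> rowbound X a -> rowbound X b.
Proof. by move=> ab h i; apply: le_trans (h i) ab. Qed.
End RB.

Section Unit.
Variable C : numClosedFieldType.

Lemma unitary_entry n m (P : 'M[C]_(n, m)) i j : P \is unitarymx -> `|P i j| <= 1.
Proof.
move=> /unitarymxP /matrixP /(_ i i); rewrite !mxE eqxx => h.
have : \sum_k `|P i k| ^+ 2 = 1.
  apply: etrans _ h; apply: eq_bigr => k _; by rewrite normCK !mxE.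
rewrite (bigD1 j) //= => e.
rewrite -(@expr_le1 _ 2) // -e lerDl sumr_ge0 // => k _.
by rewrite exprn_ge0.
Qed.

Lemma unitary_rowbound n (P : 'M[C]_n) : P \is unitarymx -> rowbound P n%:R.
Proof.
move=> uP i; apply: le_trans (_ : \sum_(j < n) (1 : C) <= _).
  by apply: ler_sum => j _; apply: unitary_entry.
by rewrite sumr_const card_ord.
Qed.
End Unit.
Section Scal.
Variable R : numFieldType.

Lemma bernoulli (c : R) k : 0 <= c -> 1 + k%:R * c <= (1 + c) ^+ k.
Proof.
move=> c0; elim: k => [|k IH]; first by rewrite mul0r addr0 expr0.
rewrite exprSr; apply: le_trans (_ : (1 + k%:R * c) * (1 + c) <= _); last first.
  by apply: ler_wpM2r => //; rewrite addr_ge0.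
rewrite mulrDr mulr1 mulrDl mul1r -natr1 mulrDl mul1r.
idtac.
by rewrite -addrA lerD2l addrA lerDl !mulr_ge0 // ler0n.
Qed.

Lemma pow_small (c : R) k : 0 <= c -> c <= 1 -> (1 - c) ^+ k * (1 + k%:R * c) <= 1.
Proof.
move=> c0 c1.
have h1 : 0 <= 1 - c by rewrite subr_ge0.
apply: le_trans (_ : (1 - c) ^+ k * (1 + c) ^+ k <= _).
  by apply: ler_wpM2l; [rewrite exprn_ge0 | apply: bernoulli].
rewrite -exprMn mulrC.
have -> : (1 + c) * (1 - c) = 1 - c ^+ 2 by rewrite mulrDl mul1r mulrBr mulr1 addrA subrK expr2.

apply: exprn_ile1; first by rewrite subr_ge0 expr_le1.
by rewrite lerBlDr lerDl exprn_ge0.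
Qed.
End Scal.
Lemma conj_pow (R : comPzRingType) n (W W' V : 'M[R]_n) : W *m W' = 1%:M ->
  forall k, (W' *m V *m W) ^+ k = W' *m V ^+ k *m W.
Proof.
move=> h; elim=> [|k IH]; first by rewrite !expr0 -idmxE mulmx1 (mulmx1C h).
rewrite exprS IH -!mulmxE !mulmxA -(mulmxA (W' *m V) W W') h mulmx1.
by rewrite exprS -mulmxE !mulmxA.
Qed.

Section Contract.
Variable C : numClosedFieldType.

Lemma trig_eigen n (U : 'M[C]_n) i : is_trig_mx U -> eigenvalue U (U i i).
Proof.
move=> tU; rewrite eigenvalue_root_char char_poly_trig //; apply/rootP.
by rewrite horner_prod (bigD1 i) //= !hornerE subrr mul0r.
Qed.

Lemma diag_rowbound n (d : 'rV[C]_n) b : (forall i, `|d 0 i| <= b) ->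
  rowbound (diag_mx d) b.
Proof.
move=> h i; rewrite (bigD1 i) //= big1 ?addr0; first by rewrite mxE eqxx mulr1n.
by move=> j /negbTE ji; rewrite mxE eq_sym ji mulr0n normr0.
Qed.

Lemma contract n (T : 'M[C]_n) (q H : nat) :
  (4 <= q)%N ->
  (forall mu, eigenvalue T mu -> `|mu| <= 1 - 2%:R / q%:R) ->
  rowbound T H%:R ->
  exists beta, (1 <= beta)%N /\ rowbound (T ^+ beta) 4%:R^-1.
Proof.
case: n T => [|n] T hq hmu hT.
  by exists 1%N; split => // -[].
have [P uP tU0] := Schur T (erefl _ : (0 < n.+1)%N).
set N := n.+1 in T hmu hT P uP tU0 *.
have Pu : P \in unitmx by apply: unitarymx_unit.
have eU : forall i, `|conjmx P T i i| <= 1 - 2%:R / q%:R.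
  move=> i; apply: hmu; apply: (eigenvalue_conjmx (stablemx_unit _ Pu)).
    by rewrite row_free_unit.
  exact: trig_eigen.
rewrite /similar_to /= conjymx // in tU0 eU.
set Pt := (P ^t*)%sesqui in tU0 eU.
set U := P *m T *m Pt in tU0 eU.
have PPt : P *m Pt = 1%:M by apply/unitarymxP.
have PtP : Pt *m P = 1%:M by rewrite /Pt -invmx_unitary // mulVmx.
have uPt : Pt \is unitarymx by rewrite trmxC_unitary.
pose e : nat := (q * (N * H * N)).+1.
pose E : C := e%:R.
have E1 : 1 <= E by rewrite ler1n.
have E0 : 0 < E by rewrite ltr0n.
pose eps : C := E^-1.
have eps0 : 0 <= eps by rewrite invr_ge0 ltW.
have eps1 : eps <= 1 by rewrite invf_le1.
have epsE : eps * E = 1 by rewrite mulVf // gt_eqF.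
pose S := diag_mx (\row_(i < N) eps ^+ i).
pose S' := diag_mx (\row_(i < N) E ^+ i).
have SS' : S *m S' = 1%:M.
  rewrite mulmx_diag -diag_const_mx; congr diag_mx; apply/rowP => j.
  by rewrite !mxE -exprMn epsE expr1n.
have S'S : S' *m S = 1%:M.
  rewrite mulmx_diag -diag_const_mx; congr diag_mx; apply/rowP => j.
  by rewrite !mxE -exprMn mulrC epsE expr1n.
pose V := S *m U *m S'.
pose W := S *m P.
pose W' := Pt *m S'.
have WW' : W *m W' = 1%:M by rewrite /W /W' mulmxA -(mulmxA S) PPt mulmx1 SS'.
have eT : T = W' *m V *m W.
  rewrite /W /W' /V /U !mulmxA -(mulmxA Pt S' S) S'S mulmx1 PtP mul1mx.
  by rewrite -(mulmxA (T *m Pt) S' S) S'S mulmx1 -(mulmxA T Pt P) PtP mulmx1.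
have eTk : forall k, T ^+ k = W' *m V ^+ k *m W.
  by move=> k; rewrite eT conj_pow.
have rbU : rowbound U (N%:R * H%:R * N%:R).
  apply: rowboundM => //; last exact: unitary_rowbound.
  apply: rowboundM => //; last exact: unitary_rowbound.
clearbody U.
have tU : forall i j : 'I_N, (i < j)%N -> U i j = 0 by apply/is_trig_mxP.
have hq0 : (0 < q)%N by apply: leq_trans hq.
have q0 : (0 : C) < q%:R by rewrite ltr0n.
have epsK : eps * (N%:R * H%:R * N%:R) <= q%:R^-1.
  rewrite mulrC -!natrM ler_pdivrMr // ler_pdivlMl // -natrM ler_nat.
  exact: leqnSn.
have rbV : rowbound V (1 - q%:R^-1).
  move=> i; rewrite /V /S /S' mul_mx_diag mul_diag_mx.
  apply: le_trans (_ : `|U i i| + eps * \sum_j `|U i j| <= _); last first.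
    apply: le_trans (_ : (1 - 2%:R / q%:R) + q%:R^-1 <= _).
      apply: lerD; first exact: eU.
      by apply: le_trans epsK; apply: ler_wpM2l => //; apply: rbU.
    by rewrite mulr_natl mulr2n opprD addrA subrK.
  rewrite (bigD1 i) //=; apply: lerD.
    rewrite !mxE mulrAC -exprMn epsE expr1n mul1r //.
  apply: le_trans (_ : \sum_(j | j != i) eps * `|U i j| <= _); last first.
    rewrite mulr_sumr [X in _ <= X](bigD1 i) //= lerDr mulr_ge0 //.
  apply: ler_sum => j ji; rewrite !mxE.
  case: (ltngtP i j) => [ij | ji' | ij].
  - by rewrite (tU _ _ ij) mulr0 mul0r normr0 mulr0.
  - rewrite mulrAC normrM mulrC [eps * _]mulrC ler_wpM2l //.
    rewrite -(subnK (ltnW ji')) exprD -mulrA -exprMn epsE expr1n mulr1.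
    rewrite ger0_norm ?exprn_ge0 // ler_iXnr // subn_gt0 //.
  - by move: ji; rewrite (val_inj ij) eqxx.
have rbW' : rowbound W' (N%:R * E ^+ N).
  apply: rowboundM; first by rewrite exprn_ge0 // ltW.
    exact: unitary_rowbound.
  apply: diag_rowbound => j; rewrite mxE ger0_norm; last by rewrite exprn_ge0 // ltW.
  by apply: ler_weXn2l => //; apply: ltnW.
have rbW : rowbound W (1 * N%:R).
  apply: rowboundM => //; last exact: unitary_rowbound.
  apply: diag_rowbound => k; rewrite mxE ger0_norm ?exprn_ge0 //.
  exact: exprn_ile1.
pose K : nat := (N * N * e ^ N)%N.
pose L : nat := (4 * K)%N.
exists (L * q)%N; split.
  by rewrite muln_gt0 /L /K !muln_gt0 expn_gt0 /= hq0.
have r0 : 0 <= 1 - q%:R^-1 :> C.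
  by rewrite subr_ge0 invf_le1 // ler1n.
rewrite eTk; apply: rowbound_le (rowboundM _ (rowboundM _ rbW' (rowboundX r0 rbV _)) rbW).
- have iq0 : (0 : C) <= q%:R^-1 by rewrite invr_ge0 ltW.
  have ps := @pow_small C (q%:R^-1) (L * q) iq0.
  rewrite invf_le1 // ler1n in ps; have {}ps := ps hq0.
  rewrite natrM -mulrA mulfV ?gt_eqF // mulr1 in ps.
  have eK : N%:R * E ^+ N * (1 * N%:R) = K%:R :> C.
    by rewrite mul1r /K !natrM natrX mulrAC.
  rewrite mulrAC eK -[4%:R^-1]mulr1 ler_pdivlMl ?ltr0n //.
  apply: le_trans ps; rewrite mulrA [X in _ <= X]mulrC ler_wpM2r ?exprn_ge0 //.
  by rewrite /L natrM lerDr.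
- by rewrite mul1r.
- by rewrite exprn_ge0.
Qed.
End Contract.
Section Alg.
Variable C : numClosedFieldType.

Lemma cauchy_lb (x : C) (p : {poly int}) : p`_0 != 0 ->
  (map_poly (intr : int -> C) p).[x] = 0 -> exists m : nat, (m.+1)%:R^-1 <= `|x|.
Proof.
move=> p00 px.
have [x1|x1] := real_leP (real1 C) (normr_real x).
  by exists 0%N; rewrite invr1.
have sp : (0 < size p)%N by rewrite lt0n size_poly_eq0; apply: contraNneq p00 => ->; rewrite coef0.
move: px; rewrite (@horner_coef_wide _ (size p)); last first.
  by rewrite size_map_inj_poly //; apply: intr_inj.
case: (size p) sp => // s _; rewrite big_ord_recl /= expr0 mulr1 coef_map /=.
move=> /eqP; rewrite addr_eq0 => /eqP h.
pose M : nat := (\sum_(i < s) absz (p`_(bump 0 i))%R)%N.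
have h1 : 1 <= `|x| * M%:R.
  have e1 : 1 <= `|(p`_0)%:~R : C|.
    by rewrite -intr_norm ler1z -gtz0_ge1 normr_gt0.
  apply: le_trans e1 _; rewrite h normrN.
  apply: le_trans (ler_norm_sum _ _ _) _.
  rewrite /M natr_sum mulr_sumr; apply: ler_sum => i _.
  rewrite normrM coef_map /= -intr_norm -natr_absz mulrC ler_wpM2r //.
  by rewrite normrX ler_iXnr // ltW.
exists M; rewrite -[_^-1]mulr1 ler_pdivrMl ?ltr0n //. rewrite -natr1 mulrDl mul1r mulrC.
by apply: le_trans h1 _; rewrite lerDl.
Qed.

Lemma int_root_lb (x : C) : x != 0 -> integralOver (intr : int -> C) x ->
  exists m : nat, (m.+1)%:R^-1 <= `|x|.
Proof.
move=> x0 [p mp px]; have := monic_neq0 mp; move: px.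
elim: {mp}(size p) {-2}p (leqnn (size p)) => [|s IH] {}p sp px p0.
  by move: p0; rewrite -size_poly_eq0 -leqn0 sp.
have [p00|p00] := eqVneq p`_0 0; last by apply: cauchy_lb p00 (rootP px).
have ep : p = drop_poly 1 p * 'X.
  rewrite -{1}(poly_take_drop 1 p) expr1 (_ : take_poly 1 p = 0) ?add0r //.
  by apply/polyP => -[|i]; rewrite coef_take_poly coef0.
apply: (IH (drop_poly 1 p)).
- by rewrite size_drop_poly leq_subLR.
- move: px; rewrite [in X in X -> _]ep rmorphM /= map_polyX /root hornerMX mulf_eq0.
  by rewrite (negbTE x0) orbF.
- by move: p0; rewrite {1}ep; apply: contra_neq => ->; rewrite mul0r.
Qed.

Lemma uniform_seq (rs : seq C) (P : nat -> C -> Prop) :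
  (forall m m' l, (m <= m')%N -> P m l -> P m' l) ->
  (forall l, l \in rs -> exists m, P m l) -> exists m, forall l, l \in rs -> P m l.
Proof.
move=> mono; elim: rs => [|a rs IH] h; first by exists 0%N.
have [ma Pa] := h a (mem_head _ _).
have [mr Pr] : exists m, forall l, l \in rs -> P m l.
  by apply: IH => l lr; apply: h; rewrite in_cons lr orbT.
exists (maxn ma mr) => l; rewrite in_cons => /orP[/eqP -> | lr].
  by apply: mono Pa; apply: leq_maxl.
by apply: mono (Pr _ lr); apply: leq_maxr.
Qed.

Lemma eig_gap n (Z : 'M[int]_n) :
  (forall l : C, eigenvalue (map_mx intr Z) l -> 1 < `|l|) ->
  exists m : nat, forall l : C, eigenvalue (map_mx intr Z) l ->
    (m.+1)%:R^-1 <= `|l| ^+ 2 - 1.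
Proof.
move=> hZ.
have [rs ers] := closed_field_poly_normal (char_poly (map_mx (intr : int -> C) Z)).
rewrite (monicP (char_poly_monic _)) scale1r in ers.
have inrs (l : C) : eigenvalue (map_mx intr Z) l -> l \in rs.
  by rewrite eigenvalue_root_char ers root_prod_XsubC.
have key (l : C) : eigenvalue (map_mx intr Z) l -> exists m : nat, (m.+1)%:R^-1 <= `|l| ^+ 2 - 1.
  move=> el.
  have il : integralOver (intr : int -> C) l.
    exists (char_poly Z); first exact: char_poly_monic.
    by rewrite map_char_poly -eigenvalue_root_char.
  have icl : integralOver (intr : int -> C) l^*.
    have [p mp rp] := integral_rmorph Num.conj_op il.
    exists p => //; move: rp; rewrite (eq_map_poly (g := intr)) // => z /=.
    exact: rmorph_int.
  have ix : integralOver (intr : int -> C) (l * l^* - 1).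
    by apply: integral_sub; [apply: integral_mul | apply: integral1].
  have l1 : 1 < `|l| ^+ 2 by rewrite exprn_egt1 //; apply: hZ.
  have ex : l * l^* - 1 = `|l| ^+ 2 - 1 by rewrite normCK.
  have x0 : l * l^* - 1 != 0 by rewrite ex subr_eq0 gt_eqF.
  have [m hm] := int_root_lb x0 ix.
  exists m; move: hm; rewrite ex ger0_norm // subr_ge0 ltW //.
pose P := fun m (l : C) => eigenvalue (map_mx intr Z) l -> (m.+1)%:R^-1 <= `|l| ^+ 2 - 1.
have mono : forall m m' l, (m <= m')%N -> P m l -> P m' l.
  move=> m m' l mm' h el; apply: le_trans (h el).
  by rewrite lef_pV2 ?posrE ?ltr0n // ler_nat.
have ex : forall l, l \in rs -> exists m, P m l.
  move=> l _; case el : (eigenvalue (map_mx intr Z) l); last by exists 0%N; rewrite /P el.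
  by have [m hm] := key l el; exists m.
have [m hm] := uniform_seq mono ex.
by exists m => l el; apply: hm => //; apply: inrs.
Qed.
End Alg.
Lemma lin_from_sq (R : numFieldType) (x : R) k : 0 <= x ->
  x ^+ 2 * k.+1%:R <= k%:R -> x <= 1 - 2%:R / (4 * k.+1)%:R.
Proof.
move=> x0 hx.
set c := 2%:R / (4 * k.+1)%:R.
have k0 : (0 : R) < k.+1%:R by rewrite ltr0n.
have c2 : c *+ 2 = k.+1%:R^-1.
  rewrite /c -mulrnAl -mulr_natr -natrM [in X in _ / X]natrM invfM mulrA (_ : (2 * 2)%N = 4%N) // mulfV ?mul1r //.
  by rewrite pnatr_eq0.
have c0 : 0 <= c by rewrite divr_ge0 // ler0n.
have c1 : c <= 1.
  by rewrite /c ler_pdivrMr ?ltr0n ?muln_gt0 // mul1r ler_nat (leq_trans _ (leq_pmulr _ _)).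
rewrite -(@ler_pXn2r _ 2) // ?nnegrE ?subr_ge0 //.
rewrite sqrrB expr1n mul1r.
apply: le_trans (_ : 1 - c *+ 2 <= _); last by rewrite lerDl exprn_ge0.
have -> : 1 - c *+ 2 = k%:R / k.+1%:R.
  rewrite c2 -{1}(mulfV (lt0r_neq0 k0)) -[X in _ - X]mul1r -mulrBl; congr (_ / _).
  by rewrite -natr1 addrK.
by rewrite ler_pdivlMr.
Qed.
Definition nrm n (z : 'cV[int]_n) : nat := (\max_(i < n) absz (z i 0)%R)%N.

Definition digitQ n (Zb : 'M[int]_n) (g : 'cV[int]_n) : Prop :=
  exists f : 'cV[rat]_n, (forall i, - 2%:R^-1 <= f i 0 /\ f i 0 < 2%:R^-1) /\
    map_mx intr g = map_mx intr Zb *m f.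

Lemma repr_int n (Zb : 'M[int]_n) (P : 'cV[int]_n -> Prop) :
  (forall z, exists y g, z = g + Zb *m y /\ P g /\ (y = 0 \/ (nrm y < nrm z)%N)) ->
  forall z, exists N (g : nat -> 'cV[int]_n),
    (forall j, (j <= N)%N -> P (g j)) /\ z = \sum_(j < N.+1) Zb ^+ j *m g j.
Proof.
move=> hs z; elim: (nrm z).+1 {-2}z (ltnSn (nrm z)) => // s IH {}z zs.
have [y [g [ez [Pg [y0|ly]]]]] := hs z.
  exists 0%N, (fun _ => g); split; first by move=> j _.
  by rewrite big_ord1 expr0 -idmxE mul1mx ez y0 mulmx0 addr0.
have [N [g' [Pg' ey]]] := IH y (leq_trans ly zs).
exists N.+1, (fun j => if j is j'.+1 then g' j' else g); split.
  by case=> [|j] //= jN; apply: Pg'.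
rewrite big_ord_recl /= expr0 -idmxE mul1mx ez ey mulmx_sumr; congr (_ + _).
by apply: eq_bigr => j _; rewrite mulmxA exprS mulmxE.
Qed.

Lemma step n (Zb : 'M[int]_n) (Tq : 'M[rat]_n) :
  map_mx intr Zb *m Tq = 1%:M -> rowbound Tq 4%:R^-1 ->
  forall z : 'cV[int]_n, exists y g, z = g + Zb *m y /\ digitQ Zb g /\
    (y = 0 \/ (nrm y < nrm z)%N).
Proof.
move=> ZT rT z.
pose zq := map_mx (intr : int -> rat) z.
pose w := Tq *m zq.
pose y := \col_i Num.floor (w i 0 + 2%:R^-1).
pose f := w - map_mx intr y.
exists y, (z - Zb *m y); split; first by rewrite subrK.
have fb : forall i, - 2%:R^-1 <= f i 0 /\ f i 0 < 2%:R^-1.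
  move=> i; rewrite /f !mxE; split.
    by rewrite lerBrDl lerBlDr; apply: floor_le.
  have h2 : (2%:R^-1 + 2%:R^-1 : rat) = 1 by apply/eqP.
  rewrite ltrBlDl; have := floorD1_gt (\sum_j Tq i j * zq j 0 + 2%:R^-1).
  by rewrite intrD -h2 addrA ltrD2r.
split.
  exists f; split => //.
  rewrite map_mxB map_mxM /f mulmxBr /w mulmxA ZT mul1mx.
  by [].
have ef : map_mx intr y = w - f by rewrite /f opprB addrC subrK.
clearbody f y; set nz := nrm z.
have hz : forall j, `|zq j 0| <= nz%:R.
  move=> j; rewrite mxE -intr_norm -natr_absz ler_nat.
  rewrite /nz /nrm; exact: (@leq_bigmax _ (fun i => absz (z i 0)%R)).
have hw : forall i, `|w i 0| <= nz%:R / 4%:R.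
  move=> i; rewrite /w mxE; apply: le_trans (ler_norm_sum _ _ _) _.
  apply: le_trans (_ : \sum_j `|Tq i j| * nz%:R <= _).
    by apply: ler_sum => j _; rewrite normrM ler_wpM2l.
  by rewrite -mulr_suml mulrC ler_wpM2l // rT.
have hy : forall i, (4 * absz (y i 0)%R <= nz + 2)%N.
  move=> i; rewrite -(ler_nat rat) natrM natrD natr_absz intr_norm.
  have -> : (y i 0)%:~R = w i 0 - f i 0.
    by have := ef; move/matrixP/(_ i 0); rewrite !mxE.
  apply: le_trans (ler_wpM2l _ (ler_normB _ _)) _ => //.
  rewrite mulrDr; apply: lerD; first by rewrite mulrC -ler_pdivlMr.
  have hf : `|f i 0| <= 2%:R^-1.
    by case: (fb i) => h1 h2; rewrite ler_norml h1 ltW.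
  apply: le_trans (ler_wpM2l _ hf) _ => //.
have [nz0|nzp] := posnP nz.
  left; apply/matrixP => i j; rewrite ord1 mxE; apply/eqP; rewrite -absz_eq0.
  by move: (hy i); rewrite nz0; case: (absz (y i 0)) => // a; rewrite mulnS.
right; rewrite /nrm; apply: (@leq_ltn_trans nz.-1); last by rewrite ltn_predL.
apply/bigmax_leqP => i _; rewrite -ltnS prednK //.
move: (hy i) nzp; move: (absz (y i 0)) => a.
move=> /ssrnat.leP h /ssrnat.ltP h'; apply/ssrnat.ltP; rewrite -?plusE -?multE in h *; lia.
Qed.

Lemma map_mxX (R S : comPzRingType) (f : {rmorphism R -> S}) n (X : 'M[R]_n) k :
  map_mx f (X ^+ k) = (map_mx f X) ^+ k.
Proof.
elim: k => [|k IH]; first by rewrite !expr0 -idmxE map_mx1.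
by rewrite !exprS -!mulmxE map_mxM IH.
Qed.

Lemma powV (R : comPzRingType) n (X Y : 'M[R]_n) : X *m Y = 1%:M ->
  forall k, X ^+ k *m Y ^+ k = 1%:M.
Proof.
move=> h; elim=> [|k IH]; first by rewrite !expr0 -idmxE mulmx1.
rewrite exprS exprSr -!mulmxE -mulmxA (mulmxA (X ^+ k)) IH mul1mx //.
Qed.

Lemma conj_powM (R : comPzRingType) n (M A B : 'M[R]_n) : M *m B = A *m M ->
  forall k, M *m B ^+ k = A ^+ k *m M.
Proof.
move=> h; elim=> [|k IH]; first by rewrite !expr0 -idmxE mulmx1 mul1mx.
by rewrite !exprSr -!mulmxE mulmxA IH -mulmxA h !mulmxA.
Qed.

Section Transfer.
Variable C : numClosedFieldType.
Lemma rb_ratr n (X : 'M[rat]_n) b : rowbound X b -> rowbound (map_mx (ratr : rat -> C) X) (ratr b).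
Proof.
move=> h i; have := h i; rewrite -(ler_rat C); apply: le_trans; rewrite rmorph_sum /=.
by rewrite (eq_bigr (fun j => ratr `|X i j|)) // => j _; rewrite mxE ratr_norm.
Qed.

Lemma rb_unratr n (X : 'M[rat]_n) b : rowbound (map_mx (ratr : rat -> C) X) (ratr b) -> rowbound X b.
Proof.
move=> h i; rewrite -(ler_rat C); apply: le_trans (h i); rewrite rmorph_sum /=.
by rewrite [X in _ <= X](eq_bigr (fun j => ratr `|X i j|)) // => j _; rewrite mxE ratr_norm.
Qed.

Lemma mu_bound n (Bc : 'M[C]_n) m : Bc \in unitmx ->
  (forall l, eigenvalue Bc l -> (m.+1)%:R^-1 <= `|l| ^+ 2 - 1) ->
  forall mu, eigenvalue (invmx Bc) mu -> `|mu| <= 1 - 2%:R / (4 * m.+2)%:R.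
Proof.
move=> Bu gap mu /eigenvalueP [v vT v0].
have mu0 : mu != 0.
  apply: contraNneq v0 => mu0.
  by rewrite -[v]mulmx1 -(mulVmx Bu) mulmxA vT mu0 scale0r mul0mx.
have ev : v *m Bc = mu^-1 *: v.
  have e : v = mu *: (v *m Bc) by rewrite scalemxAl -vT -mulmxA mulVmx // mulmx1.
  by rewrite {2}e scalerA mulVf // scale1r.
have el : eigenvalue Bc mu^-1 by apply/eigenvalueP; exists v.
have g := gap _ el.
apply: lin_from_sq => //.
have a0 : 0 < `|mu| ^+ 2 by rewrite exprn_gt0 // normr_gt0.
move: g; rewrite normfV exprVn lerBrDr; set a := `|mu| ^+ 2 => g.
have := ler_wpM2r (ltW (mulr_gt0 a0 (ltr0Sn _ m))) g.
have -> : ((m.+1)%:R^-1 + 1) * (a * m.+1%:R) = a * m.+2%:R.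
  rewrite mulrDl mul1r mulrCA mulVf ?pnatr_eq0 // mulr1 -[X in X + _]mulr1 -mulrDr.
  by rewrite addrC natr1.
by rewrite mulKf // gt_eqF.
Qed.

Lemma unit_of_eig n (Bc : 'M[C]_n) : (forall l, eigenvalue Bc l -> 1 < `|l|) ->
  Bc \in unitmx.
Proof.
move=> h; apply: contraT => nu.
have : eigenvalue Bc 0.
  rewrite eigenvalue_root_char /root horner_coef0 char_poly_det mulf_eq0.
  by rewrite unitmxE unitfE negbK in nu; rewrite nu orbT.
by move/h; rewrite normr0 ltr10.
Qed.

Lemma ratr_intmx p q (X : 'M[int]_(p, q)) :
  map_mx (ratr : rat -> C) (map_mx intr X) = map_mx intr X.
Proof. by apply/matrixP => i j; rewrite !mxE ratr_int. Qed.
End Transfer.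

Unset Implicit Arguments.
Theorem mainTheorem11 (C : numClosedFieldType) (n : nat) (M A : 'M[C]_n) :
  M \in unitmx -> dilation_matrix_for M A ->
  exists beta : nat, (1 <= beta)%N /\
    forall x : 'cV[C]_n, in_lattice M x ->
      exists (N : nat) (d : nat -> 'cV[C]_n),
        (forall j, (j <= N)%N -> in_digit_set M (A ^+ beta) (d j)) /\
        x = \sum_(j < N.+1) (A ^+ (beta * j)) *m d j.
Proof.
move=> Mu [[Z eB] hev].
set B := invmx M *m A *m M in eB hev.
have eB' : B = map_mx (intr : int -> C) Z by [].
have hZ : forall l : C, eigenvalue (map_mx intr Z) l -> 1 < `|l| by rewrite -eB'.
have [m gap] := eig_gap hZ.
have Bu : map_mx (intr : int -> C) Z \in unitmx by apply: unit_of_eig.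
pose Bq : 'M[rat]_n := map_mx intr Z.
have eBC : map_mx (ratr : rat -> C) Bq = map_mx intr Z.
  by apply/matrixP => i j; rewrite !mxE ratr_int.
have Bqu : Bq \in unitmx by rewrite -(map_unitmx (ratr : {rmorphism rat -> C})) eBC.
pose Tq := invmx Bq.
have eT : map_mx (ratr : rat -> C) Tq = invmx (map_mx intr Z) by rewrite map_invmx eBC.
pose H := Num.bound (\sum_i \sum_j `|Tq i j|).
have rTq : rowbound Tq H%:R.
  move=> i; apply: le_trans (ltW (archi_boundP _)); last first.
    by apply: sumr_ge0 => k _; apply: sumr_ge0.
  rewrite [X in _ <= X](bigD1 i) //= lerDl.
  by apply: sumr_ge0 => k _; apply: sumr_ge0.
have rT : rowbound (invmx (map_mx (intr : int -> C) Z)) H%:R.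
  by rewrite -eT -(ratr_nat C); apply: rb_ratr.
have hmu := mu_bound Bu gap.
have [beta [b1 rTb]] := contract (leq_pmulr _ (ltn0Sn _) : (4 <= 4 * m.+2)%N) hmu rT.
exists beta; split => //.
have rTqb : rowbound (Tq ^+ beta) 4%:R^-1.
  apply: (@rb_unratr C); rewrite map_mxX eT fmorphV rmorph_nat; exact: rTb.
pose Zb := Z ^+ beta.
have ZT : map_mx intr Zb *m Tq ^+ beta = 1%:M.
  by rewrite map_mxX; apply: powV; apply: mulmxV.
have rep := repr_int (step ZT rTqb).
have MB : M *m B = A *m M by rewrite /B !mulmxA mulmxV // mul1mx.
have MBk := conj_powM MB.
move=> x [z ->].
have [N [g [dg ez]]] := rep z.
exists N, (fun j => M *m map_mx intr (g j)); split.
  move=> j jN; have [f [fb ef]] := dg j jN; split.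
    by exists (g j).
  exists (M *m map_mx (ratr : rat -> C) f); split.
    exists (map_mx (ratr : rat -> C) f); split => // i.
    rewrite mxE; case: (fb i) => h1 h2.
    have e2 : (2%:R^-1 : C) = ratr 2%:R^-1 by rewrite fmorphV rmorph_nat.
    rewrite e2 -rmorphN ler_rat ltr_rat h1 h2; split => //.
    rewrite realE -[0 : C](rmorph0 (ratr : {rmorphism rat -> C})) !ler_rat.
    exact: le_total.
  rewrite mulmxA -MBk eB' -map_mxX -mulmxA; congr (M *m _).
  have := congr1 (map_mx (ratr : rat -> C)) ef; rewrite map_mxM !ratr_intmx => ->.
  by [].
rewrite ez map_mx_sum mulmx_sumr; apply: eq_bigr => j _.
rewrite map_mxM !map_mxX -exprM [map_mx _ Z](_ : _ = B) // [LHS]mulmxA MBk -mulmxA.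
by [].
Qed.
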